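(* Let $J$ be a nonempty basic cylinder in $M_a$ and $p=(p_1,p_2,\dots)\in J$. Then for each $i\in\mathbb N$: $i\notin\Lambda(J)$ if and only if $x_i=p_i$ for all $x=(x_1,x_2,\dots)\in\mathrm{GS}(J,p)$.
   Context: Let $a=\{a_i\}$ be a sequence of positive reals with $\sum_i a_i^2<\infty$, $M_a=\{x\in\mathbb{R}^{\mathbb N}:\sum_i a_i^2x_i^2<\infty\}$ with inner product $\langle x,y\rangle_a=\sum_i a_i^2x_iy_i$ and norm $\|\cdot\|_a$. $e_i$ denotes the sequence with $1$ in position $i$ and $0$ elsewhere. For nonempty $E\subset M_a$, $\Lambda(E)$ is the set of $i$ for which there exist $x\in E$ and $\alpha\ne0$ with $x+\alpha e_i\in E$. For $p\in E$, $\mathrm{GS}(E,p)=\{p+\sum_i\alpha_i(x_i-p)\in M_a: x_i\in E,\ \alpha_i\in\mathbb R\}$, the index running over a finite or countable subset of $\mathbb N$, infinite sums being $\|\cdot\|_a$-limits of partial sums. A basic cylinder is a set $J=\prod_{i=1}^\infty J_i$ where, for some $n\in\mathbb N$ and pairwise disjoint $\Lambda_1,\dots,\Lambda_4\subset\{1,\dots,n\}$: $J_i=[0,p_{2i}]$ ($i\in\Lambda_1$), $[p_{1i},p_{2i}]$ ($i\in\Lambda_2$), $[p_{1i},1]$ ($i\in\Lambda_3$), $\{p_{1i}\}$ ($i\in\Lambda_4$), $[0,1]$ otherwise, with $0<p_{1i}<p_{2i}<1$ for $i\in\Lambda_1\cup\Lambda_2\cup\Lambda_3$ and $0\le p_{1i}\le1$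 for $i\in\Lambda_4$. *)

(* Defs.v *)
From Stdlib Require Import Reals.
From Coquelicot Require Import Coquelicot.
Open Scope R_scope.

Definition seqR := nat -> R.

Definition weight_ok (a : seqR) : Prop :=
  (forall i, 0 < a i) /\ ex_series (fun i => (a i) ^ 2).

Definition in_Ma (a : seqR) (x : seqR) : Prop :=
  ex_series (fun i => (a i) ^ 2 * (x i) ^ 2).

(* ||x||_a^2 = sum a_i^2 x_i^2  (meaningful for x in M_a) *)
Definition normsq_a (a : seqR) (x : seqR) : R :=
  Series (fun i => (a i) ^ 2 * (x i) ^ 2).

Definition e_ (i : nat) : seqR := fun j => if Nat.eqb j i then 1 else 0.

Definition Lambda (E : seqR -> Prop) (i : nat) : Prop :=
  exists x alpha, E x /\ alpha <> 0 /\ E (fun j => x j + alpha * e_ i j).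

Fixpoint psum (f : nat -> R) (n : nat) : R :=
  match n with O => 0 | S m => psum f m + f m end.

Definition GS_partial (p : seqR) (xs : nat -> seqR) (alpha : seqR) (n : nat)
  : seqR :=
  fun j => p j + psum (fun k => alpha k * (xs k j - p j)) n.

(* GS(E,p): elements y of M_a of the form p + sum_k alpha_k (x_k - p), x_k in E,
   the index ranging over a finite or countable subset of N (encoded by letting
   alpha_k = 0 off that subset), the sum being the ||.||_a-limit of the partial
   sums. *)
Definition GS (a : seqR) (E : seqR -> Prop) (p : seqR) (y : seqR) : Prop :=
  in_Ma a y /\
  exists (xs : nat -> seqR) (alpha : seqR),
    (forall k, E (xs k)) /\
    (forall n, in_Ma a (fun j => y j - GS_partial p xs alpha n j)) /\
    is_lim_seq (fun n => normsq_a a (fun j => y j - GS_partial p xs alpha n j)) 0.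

(* Basic cylinders. Indices are 0-based here: {1,...,n} of the paper becomes
   {0,...,n-1}. *)
Definition basic_cylinder (J : seqR -> Prop) : Prop :=
  exists (n : nat) (L1 L2 L3 L4 : nat -> Prop) (p1 p2 : seqR),
    (forall i, (L1 i \/ L2 i \/ L3 i \/ L4 i) -> (i < n)%nat) /\
    (forall i, ~ (L1 i /\ L2 i)) /\ (forall i, ~ (L1 i /\ L3 i)) /\
    (forall i, ~ (L1 i /\ L4 i)) /\ (forall i, ~ (L2 i /\ L3 i)) /\
    (forall i, ~ (L2 i /\ L4 i)) /\ (forall i, ~ (L3 i /\ L4 i)) /\
    (forall i, (L1 i \/ L2 i \/ L3 i) -> 0 < p1 i /\ p1 i < p2 i /\ p2 i < 1) /\
    (forall i, L4 i -> 0 <= p1 i <= 1) /\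
    (forall x, J x <->
       forall i,
         (L1 i -> 0 <= x i <= p2 i) /\
         (L2 i -> p1 i <= x i <= p2 i) /\
         (L3 i -> p1 i <= x i <= 1) /\
         (L4 i -> x i = p1 i) /\
         (~ L1 i -> ~ L2 i -> ~ L3 i -> ~ L4 i -> 0 <= x i <= 1)).

(* Main.v *)
Require Import Defs.
From Stdlib Require Import Reals Lra Classical.
From Coquelicot Require Import Coquelicot.
Open Scope R_scope.

Lemma Series_zero : Series (fun _ => 0) = 0.
Proof.
  assert (H : Series (fun _ : nat => 0) = - Series (fun _ : nat => 0)).
  { rewrite <- Series_opp. apply Series_ext. intros; lra. }
  lra.
Qed.

Lemma term_le_Series : forall i (f : nat -> R),
  (forall n, 0 <= f n) -> ex_series f -> f i <= Series f.
Proof.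
  induction i; intros f Hf Hex.
  - rewrite Series_incr_1 by exact Hex.
    assert (0 <= Series (fun k => f (S k))).
    { rewrite <- Series_zero. apply Series_le.
      intros n; cbv beta; split; [lra| apply Hf]. apply (proj1 (ex_series_incr_1 f)); exact Hex. }
    lra.
  - rewrite Series_incr_1 by exact Hex.
    assert (f (S i) <= Series (fun k => f (S k))).
    { apply (IHi (fun k => f (S k))). intros; apply Hf. apply (proj1 (ex_series_incr_1 f)); exact Hex. }
    specialize (Hf 0%nat). lra.
Qed.

Lemma bounded_in_Ma (a : nat -> R) (Ha : weight_ok a) (z : nat -> R) (C : R) :
  (forall j, Rabs (z j) <= C) -> in_Ma a z.
Proof.
  intros Hz. destruct Ha as [Hpos Hex].
  unfold in_Ma.
  apply (@ex_series_le R_AbsRing R_CompleteNormedModule _ (fun j => scal (C^2) (a j ^ 2))).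
  - intros n. change (norm (a n ^ 2 * z n ^ 2)) with (Rabs (a n ^ 2 * z n ^ 2)).
    change (scal (C^2) (a n ^ 2)) with (C^2 * a n ^ 2).
    rewrite Rabs_pos_eq by (apply Rmult_le_pos; apply pow2_ge_0).
    specialize (Hz n).
    assert (z n ^ 2 <= C ^ 2).
    { assert (0 <= Rabs (z n)) by apply Rabs_pos.
      replace (z n ^ 2) with (Rabs (z n) ^ 2) by apply pow2_abs.
      apply pow_incr. lra. }
    assert (0 <= a n ^ 2) by apply pow2_ge_0. nra.
  - apply (@ex_series_scal R_AbsRing R_NormedModule (C^2) (fun j => a j ^ 2)); exact Hex.
Qed.

Lemma J_bounded (J : (nat -> R) -> Prop) (HJ : basic_cylinder J) x :
  J x -> forall j, 0 <= x j <= 1.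
Proof.
  destruct HJ as (n & L1 & L2 & L3 & L4 & p1 & p2 & Hn & D12 & D13 & D14 & D23 & D24 & D34 & Hp & Hp4 & HJ).
  intros Jx j. generalize (proj1 (HJ _) Jx); clear Jx; intro Jx. specialize (Jx j).
  destruct Jx as (A1 & A2 & A3 & A4 & A5).
  destruct (classic (L1 j)) as [h1|h1].
  { specialize (Hp j (or_introl h1)). specialize (A1 h1). lra. }
  destruct (classic (L2 j)) as [h2|h2].
  { specialize (Hp j (or_intror (or_introl h2))). specialize (A2 h2). lra. }
  destruct (classic (L3 j)) as [h3|h3].
  { specialize (Hp j (or_intror (or_intror h3))). specialize (A3 h3). lra. }
  destruct (classic (L4 j)) as [h4|h4].
  { specialize (Hp4 j h4). specialize (A4 h4). lra. }
  auto.
Qed.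

Lemma psum_zero f n : (forall k, f k = 0) -> psum f n = 0.
Proof. intros H; induction n; simpl; [reflexivity| rewrite IHn, H; lra]. Qed.

Lemma notLambda_frozen (J : (nat -> R) -> Prop) (HJ : basic_cylinder J)
  (p : nat -> R) (Hp : J p) i :
  ~ Lambda J i -> forall x, J x -> x i = p i.
Proof.
  intros HL.
  destruct HJ as (n & L1 & L2 & L3 & L4 & p1 & p2 & Hn & D12 & D13 & D14 & D23 & D24 & D34 & Hpp & Hp4 & HJ).
  destruct (classic (L4 i)) as [h4|h4].
  { intros x Jx. generalize (proj1 (HJ _) Jx); clear Jx; intro Jx. generalize (proj1 (HJ _) Hp); clear Hp; intro Hp.
    rewrite (proj1 (proj2 (proj2 (proj2 (Jx i)))) h4).
    rewrite (proj1 (proj2 (proj2 (proj2 (Hp i)))) h4). reflexivity. }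
  exfalso.
  set (Cond := fun j t =>
         (L1 j -> 0 <= t <= p2 j) /\
         (L2 j -> p1 j <= t <= p2 j) /\
         (L3 j -> p1 j <= t <= 1) /\
         (L4 j -> t = p1 j) /\
         (~ L1 j -> ~ L2 j -> ~ L3 j -> ~ L4 j -> 0 <= t <= 1)).
  assert (Hlu : exists l u, l < u /\ Cond i l /\ Cond i u).
  { destruct (classic (L1 i)) as [h1|h1].
    { destruct (Hpp i (or_introl h1)) as [Hq1 Hq2]. exists 0, (p2 i).
      unfold Cond; repeat split; intros;
      solve [lra | tauto | exfalso; solve [apply (D12 i); tauto|apply (D13 i); tauto|apply (D14 i); tauto|apply (D23 i); tauto|apply (D24 i); tauto|apply (D34 i); tauto]]. }
    destruct (classic (L2 i)) as [h2|h2].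
    { destruct (Hpp i (or_intror (or_introl h2))) as [Hq1 Hq2]. exists (p1 i), (p2 i).
      unfold Cond; repeat split; intros;
      solve [lra | tauto | exfalso; solve [apply (D12 i); tauto|apply (D13 i); tauto|apply (D14 i); tauto|apply (D23 i); tauto|apply (D24 i); tauto|apply (D34 i); tauto]]. }
    destruct (classic (L3 i)) as [h3|h3].
    { destruct (Hpp i (or_intror (or_intror h3))) as [Hq1 Hq2]. exists (p1 i), 1.
      unfold Cond; repeat split; intros;
      solve [lra | tauto | exfalso; solve [apply (D12 i); tauto|apply (D13 i); tauto|apply (D14 i); tauto|apply (D23 i); tauto|apply (D24 i); tauto|apply (D34 i); tauto]]. }
    exists 0, 1. unfold Cond; repeat split; intros; try lra; tauto. }
  destruct Hlu as (l & u & Hlt & Cl & Cu).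
  assert (Hv : exists v, v <> p i /\ Cond i v).
  { destruct (Req_dec (p i) l) as [e|e].
    - exists u. split; [lra|exact Cu].
    - exists l. split; [auto|exact Cl]. }
  destruct Hv as (v & Hvne & Cv).
  apply HL. exists p, (v - p i). split; [exact Hp|]. split; [lra|].
  apply HJ. intros j. unfold e_.
  destruct (Nat.eqb j i) eqn:E.
  - apply Nat.eqb_eq in E. subst j.
    replace (p i + (v - p i) * 1) with v by ring. exact Cv.
  - replace (p j + (v - p i) * 0) with (p j) by ring.
    apply HJ. exact Hp.
Qed.

Theorem lemma3p4 (a : nat -> R) (Ha : weight_ok a)
  (J : (nat -> R) -> Prop) (HJ : basic_cylinder J) (Hne : exists x, J x)
  (p : nat -> R) (Hp : J p) (i : nat) :
  ~ Lambda J i <-> (forall x, GS a J p x -> x i = p i).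
Proof.
  split.
  - intros HL y [Hy (xs & al & Hxs & Hin & Hlim)].
    assert (Hfr := notLambda_frozen J HJ p Hp i HL).
    assert (Hpart : forall n, GS_partial p xs al n i = p i).
    { intros m. unfold GS_partial. rewrite psum_zero; [ring|].
      intros k. rewrite (Hfr (xs k) (Hxs k)). ring. }
    set (c := a i ^ 2 * (y i - p i) ^ 2).
    assert (Hle : forall n, c <= normsq_a a (fun j => y j - GS_partial p xs al n j)).
    { intros m. unfold normsq_a, c.
      rewrite <- (Hpart m).
      apply (term_le_Series i (fun j => a j ^ 2 * (y j - GS_partial p xs al m j) ^ 2)).
      - intros; apply Rmult_le_pos; apply pow2_ge_0.
      - apply Hin. }
    assert (H0 := is_lim_seq_le (fun _ => c) _ c 0 Hle (is_lim_seq_const c) Hlim).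
    simpl in H0.
    destruct Ha as [Hpos _]. specialize (Hpos i).
    assert (0 <= (y i - p i) ^ 2) by apply pow2_ge_0.
    assert (0 < a i ^ 2) by (apply pow_lt; lra).
    assert ((y i - p i) ^ 2 = 0) by (unfold c in H0; nra).
    nra.
  - intros H (x & al & Jx & Hal & Jx').
    set (x' := fun j => x j + al * e_ i j) in *.
    set (y := fun j => p j + al * e_ i j).
    assert (He : forall j, Rabs (e_ i j) <= 1).
    { intros j; unfold e_; destruct (Nat.eqb j i); rewrite ?Rabs_R1, ?Rabs_R0; lra. }
    assert (Bx := J_bounded J HJ x Jx).
    assert (Bp := J_bounded J HJ p Hp).
    set (xs := fun k => match k with 0%nat => x' | 1%nat => x | _ => p end).
    set (cs := fun k => match k with 0%nat => 1 | 1%nat => -1 | _ => 0 end).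
    assert (Hyi : y i = p i).
    { apply H. split.
      - apply (bounded_in_Ma a Ha _ (1 + Rabs al)). intros j. unfold y.
        eapply Rle_trans; [apply Rabs_triang|]. rewrite Rabs_mult.
        specialize (He j). specialize (Bp j).
        assert (0 <= Rabs al) by apply Rabs_pos.
        rewrite Rabs_pos_eq by lra. nra.
      - exists xs, cs. split; [|split].
        + intros [|[|k]]; simpl; auto.
        + intros [|[|m]].
          * apply (bounded_in_Ma a Ha _ (Rabs al)). intros j.
            unfold GS_partial, y; simpl.
            replace (p j + al * e_ i j - (p j + 0)) with (al * e_ i j) by ring.
            rewrite Rabs_mult. specialize (He j).
            assert (0 <= Rabs al) by apply Rabs_pos. nra.
          * apply (bounded_in_Ma a Ha _ 1). intros j.
            unfold GS_partial, y, xs, cs, x'; simpl.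
            replace (p j + al * e_ i j - (p j + (0 + 1 * (x j + al * e_ i j - p j))))
              with (p j - x j) by ring.
            specialize (Bx j). specialize (Bp j). apply Rabs_le. lra.
          * apply (bounded_in_Ma a Ha _ 0). intros j.
            assert (E : forall m, psum (fun k => cs k * (xs k j - p j)) (S (S m))
                                  = al * e_ i j).
            { induction m0 as [|m0 IH].
              - simpl. unfold x'. ring.
              - change (psum (fun k => cs k * (xs k j - p j)) (S (S (S m0))))
                  with (psum (fun k => cs k * (xs k j - p j)) (S (S m0))
                        + cs (S (S m0)) * (xs (S (S m0)) j - p j)).
                rewrite IH. simpl. ring. }
            unfold GS_partial, y. rewrite E.
            replace (p j + al * e_ i j - (p j + al * e_ i j)) with 0 by ring.
            rewrite Rabs_R0; lra.
        + apply (is_lim_seq_incr_n _ 2).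
          apply (is_lim_seq_ext (fun _ => 0)); [|apply is_lim_seq_const].
          intros m. unfold normsq_a.
          rewrite <- Series_zero at 1. apply Series_ext. intros j.
          assert (E : forall m, psum (fun k => cs k * (xs k j - p j)) (S (S m))
                                = al * e_ i j).
          { induction m0 as [|m0 IH].
            - simpl. unfold x'. ring.
            - change (psum (fun k => cs k * (xs k j - p j)) (S (S (S m0))))
                with (psum (fun k => cs k * (xs k j - p j)) (S (S m0))
                      + cs (S (S m0)) * (xs (S (S m0)) j - p j)).
              rewrite IH. simpl. ring. }
          replace (m + 2)%nat with (S (S m)) by (rewrite Nat.add_comm; reflexivity).
          unfold GS_partial, y. rewrite E. ring. }
    unfold y, e_ in Hyi. rewrite Nat.eqb_refl in Hyi. apply Hal. lra.
Qed.
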